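(* Every Halin graph is $(3,1)$-choosable.
   Context: A Halin graph is a planar graph constructed from a planar drawing of a tree with at least four vertices and no vertices of degree two by connecting its leaves by a cycle that crosses none of its edges. A $(k,d)$-list assignment for a graph $G$ assigns to each vertex $v$ a list $L(v)$ of at least $k$ colors such that $|L(x)\cap L(y)|\le d$ whenever $x$ and $y$ are adjacent; $G$ is $(k,d)$-choosable if for every $(k,d)$-list assignment $L$ there is a proper vertex coloring $\varphi$ with $\varphi(v)\in L(v)$ for all $v$. *)

(* Defs.v *)
From mathcomp Require Import all_boot.
Set Implicit Arguments. Unset Strict Implicit. Unset Printing Implicit Defensive.

Definition simple_graph (T : finType) (e : rel T) : Prop :=
  (forall x y, e x y = e y x) /\ (forall x, ~~ e x x).

Definition deg (T : finType) (e : rel T) (v : T) : nat := #|[set u | e v u]|.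

(* A tree: a connected simple graph with |V| - 1 edges (edges counted as
   ordered pairs, hence the factor 2). *)
Definition is_tree (T : finType) (t : rel T) : Prop :=
  simple_graph t /\ (forall x y, connect t x y) /\
  #|[set p : T * T | t p.1 p.2]| = 2 * (#|T| - 1).

Definition is_leaf (T : finType) (t : rel T) (v : T) : bool := deg t v == 1.

Definition del_edge (T : finType) (t : rel T) (u v : T) : rel T :=
  fun x y => t x y && ~~ (((x == u) && (y == v)) || ((x == v) && (y == u))).

Definition cyclic_arc (T : finType) (s : seq T) (A : pred T) : Prop :=
  exists i k, forall x, (x \in take k (rot i s)) = A x.

(* The cyclic order s of the leaves of t is the one induced by a planar
   drawing of t with the leaves on a closed curve crossing no tree edge:
   for every tree edge uv, the leaves on u's side of uv form an arc of s. *)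
Definition planar_leaf_order (T : finType) (t : rel T) (s : seq T) : Prop :=
  forall u v, t u v ->
    cyclic_arc s (fun w => is_leaf t w && connect (del_edge t u v) u w).

Definition halin (T : finType) (e : rel T) : Prop :=
  exists (t : rel T) (s : seq T),
    [/\ is_tree t, 4 <= #|T| & (forall v, deg t v != 2)] /\
    [/\ uniq s, (forall v, (v \in s) = is_leaf t v),
        planar_leaf_order t s &
        forall x y, e x y =
          t x y || [&& x \in s, y \in s & (next s x == y) || (next s y == x)]].

Definition kd_list_assignment (T : finType) (e : rel T) (k d : nat)
    (L : T -> seq nat) : Prop :=
  (forall v, k <= size (undup (L v))) /\
  (forall x y, e x y -> size [seq c <- undup (L x) | c \in L y] <= d).

Definition L_colorable (T : finType) (e : rel T) (L : T -> seq nat) : Prop :=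
  exists f : T -> nat, (forall v, f v \in L v) /\ (forall x y, e x y -> f x != f y).

Definition kd_choosable (T : finType) (e : rel T) (k d : nat) : Prop :=
  forall L, kd_list_assignment e k d L -> L_colorable e L.

(* Main.v *)
Require Import Defs.
From mathcomp Require Import all_boot.
From Stdlib Require Import Lia.
From mathcomp Require Import zify.
Set Implicit Arguments. Unset Strict Implicit. Unset Printing Implicit Defensive.

Lemma choose_col (u w : seq nat) : size w < size (undup u) -> exists2 d, d \in u & d \notin w.
Proof.
move=> H; case: (boolP (has (fun d => d \notin w) (undup u))) => [/hasP [d]|/hasPn Hn].
  by rewrite mem_undup => ? ?; exists d.
have : size (undup u) <= size w.
  apply: uniq_leq_size; first exact: undup_uniq.
  by move=> d /Hn; rewrite negbK.
by rewrite leqNgt H.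
Qed.

Lemma pathcol (T : finType) (L : T -> seq nat) (hL : forall y, 2 < size (undup (L y)))
  (h : T -> nat) : forall q x0 c0, uniq q -> x0 \notin q ->
  exists g : T -> nat, [/\ g x0 = c0,
    (forall y, y \in q -> (g y \in L y) && (g y != h y)) &
    path (fun a b => g a != g b) x0 q].
Proof.
elim=> [|y q IH] x0 c0 Hu Hx.
  by exists (fun _ => c0).
have [d dL dw] : exists2 d, d \in L y & d \notin [:: c0; h y].
  by apply: choose_col; apply: leq_trans (hL y).
move: Hu => /= /andP [yq Uq].
have [g' [g'y g'q g'p]] := IH y d Uq yq.
exists (fun z => if z == x0 then c0 else g' z); split.
- by rewrite eqxx.
- move=> z zq; have zx : (z == x0) = false.
    by apply/eqP => E; move: Hx; rewrite -E zq.
  rewrite zx; move: zq; rewrite inE => /orP [/eqP ->|]; last exact: g'q.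
  rewrite g'y dL /=; move: dw; rewrite !inE negb_or => /andP [_ ->]; done.
- rewrite /= eqxx.
  have yx : (y == x0) = false by apply/eqP => E; move: Hx; rewrite -E inE eqxx.
  rewrite yx g'y; apply/andP; split.
    by move: dw; rewrite !inE negb_or eq_sym => /andP [-> _].
  rewrite (@eq_in_path _ (fun z => z != x0) _ (fun a b => g' a != g' b)) //.
    by move=> a b /= /negbTE -> /negbTE ->.
  apply/allP => z zq /=; apply/eqP => E; move: Hx; rewrite -E !inE.
  by move: zq; rewrite inE => ->.
Qed.
Section Tr.
Variables (T : finType) (t : rel T).
Hypothesis Hsym : forall x y, t x y = t y x.
Hypothesis Hirr : forall x, ~~ t x x.
Hypothesis Hc : forall x y, connect t x y.

Definition Pout (S : {set T}) := [set p : T * T | t p.1 p.2 && ((p.1 \notin S) || (p.2 \notin S))].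

Lemma cross_edge (S : {set T}) a b : a \in S -> b \notin S ->
  exists x y, [/\ t x y, x \notin S & y \in S].
Proof.
move=> aS bS.
case: (boolP [exists x, exists y, [&& t x y, x \notin S & y \in S]]).
  by move=> /existsP [x /existsP [y /and3P [? ? ?]]]; exists x, y.
move=> /existsPn H; exfalso.
have cl : closed t (mem S).
  move=> x y txy; apply/idP/idP => [xS|yS].
    apply/negPn/negP => yS; have := H y; rewrite negb_exists => /forallP /(_ x).
    by rewrite Hsym txy yS xS.
  apply/negPn/negP => xS; have := H x; rewrite negb_exists => /forallP /(_ y).
  by rewrite txy xS yS.
have := closed_connect cl (Hc a b); rewrite aS.
by move: bS => /negbTE ->.
Qed.

Lemma lemA : forall n (S : {set T}), #|~: S| = n -> S != set0 -> 2 * n <= #|Pout S|.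
Proof.
elim=> [|n IH] S HS HS0; first by [].
have [b] : exists b, b \in ~: S by apply/card_gt0P; rewrite HS.
rewrite inE => bS.
have [a aS] : exists a, a \in S by apply/card_gt0P; rewrite card_gt0.
have [x [y [txy xS yS]]] := cross_edge aS bS.
have xy : x != y by apply/eqP => E; move: xS; rewrite E yS.
have HS' : #|~: (x |: S)| = n.
  have := cardsC S; have := cardsC (x |: S); rewrite cardsU1 xS HS /=.
  move=> h1 h2; rewrite -h2 in h1; lia.
have := IH _ HS'.
have -> : x |: S != set0 by apply/set0Pn; exists x; rewrite !inE eqxx.
move=> /(_ isT) H.
have sub : (x, y) |: ((y, x) |: Pout (x |: S)) \subset Pout S.
  apply/subsetP => p; rewrite !inE => /orP [/eqP -> /=| /orP [/eqP -> /=|]].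
  - by rewrite txy xS.
  - by rewrite Hsym txy xS orbT.
  - move=> /andP [-> /orP [|]]; rewrite negb_or => /andP [_ ->] //; by rewrite orbT.
have := subset_leq_card sub; rewrite !cardsU1 !inE /=.
rewrite !negb_and !negb_or xS yS !eqxx /= ?orbT.
have -> : ((x, y) != (y, x)) by apply/eqP => [[E _]]; move: xy; rewrite E eqxx.
rewrite !andbF /= ?orbT /=; move=> h; apply: leq_trans h; rewrite addnA addnC mulnSr leq_add2r; exact: H.
Qed.

Lemma pair_sum (S : {set T}) :
  #|[set p : T * T | (p.1 \in S) && ((p.2 \in S) && t p.1 p.2)]| =
  \sum_(i in S) #|[set j in S | t i j]|.
Proof.
rewrite -sum1_card.
rewrite (eq_bigl (fun p : T * T => (p.1 \in S) && ((p.2 \in S) && t p.1 p.2))); last first.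
  by move=> p; rewrite inE.
rewrite -(pair_big_dep (fun i => i \in S) (fun i j => (j \in S) && t i j) (fun _ _ => 1)) /=.
apply: eq_bigr => i _; rewrite -sum1_card; apply: eq_bigl => j; by rewrite inE.
Qed.

Lemma forestF (S : {set T}) : #|[set p : T * T | t p.1 p.2]| = 2 * (#|T| - 1) ->
  S != set0 -> exists2 x, x \in S & #|[set y in S | t x y]| <= 1.
Proof.
move=> HE HS0.
case: (boolP [exists x in S, #|[set y in S | t x y]| <= 1]).
  by move=> /existsP [x /andP [? ?]]; exists x.
move=> /existsPn H; exfalso.
have H2 : forall x, x \in S -> 2 <= #|[set y in S | t x y]|.
  by move=> x xS; have := H x; rewrite xS /= -ltnNge.
set B := [set p : T * T | (p.1 \in S) && (p.2 \in S)].
have := cardsID B [set p : T * T | t p.1 p.2].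
have -> : [set p : T * T | t p.1 p.2] :&: B = [set p : T * T | (p.1 \in S) && ((p.2 \in S) && t p.1 p.2)].
  apply/setP => p; rewrite !inE; by case: (t p.1 p.2); case: (p.1 \in S); case: (p.2 \in S).
have -> : [set p : T * T | t p.1 p.2] :\: B = Pout S.
  by apply/setP => p; rewrite !inE negb_and andbC.
rewrite pair_sum HE.
have h1 : 2 * #|S| <= \sum_(i in S) #|[set j in S | t i j]|.
  rewrite mulnC -sum_nat_const; apply: leq_sum => i; exact: H2.
have h2 := lemA (erefl _) HS0.
have h3 := cardsC S.
have h4 : 0 < #|S| by rewrite card_gt0.
lia.
Qed.

Lemma color_forest (L : T -> seq nat) (hL : forall v, 2 < size (undup (L v))) :
  #|[set p : T * T | t p.1 p.2]| = 2 * (#|T| - 1) ->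
  forall S : {set T}, exists f : T -> nat, (forall v, v \in S -> f v \in L v) /\
    (forall x y, x \in S -> y \in S -> t x y -> f x != f y).
Proof.
move=> HE S; move Hn : #|S| => n; elim: n S Hn => [|n IH] S Hn.
  exists (fun _ => 0); split => [v|x y]; move: Hn => /eqP; rewrite cards_eq0 => /eqP ->;
  by rewrite inE.
have HS0 : S != set0 by rewrite -card_gt0 Hn.
have [x xS Hx] := forestF HE HS0.
have HS' : #|S :\ x| = n by move: Hn; rewrite (cardsD1 x S) xS add1n => [[]].
have [f [fL fp]] := IH _ HS'.
set N := [set y in S | t x y].
have [d dL dw] : exists2 d, d \in L x & d \notin [seq f y | y <- enum N].
  apply: choose_col; rewrite size_map -cardE; apply: leq_ltn_trans Hx _; exact: ltn_trans (hL x).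
exists (fun z => if z == x then d else f z); split.
  move=> v vS; case: eqP => [->//|/eqP vx]; apply: fL; by rewrite !inE vx.
move=> a b aS bS tab.
case: (eqVneq a x) => [ax|ax]; case: (eqVneq b x) => [bx|bx].
- by move: tab; rewrite ax bx (negbTE (Hirr x)).
- apply: contra dw => /eqP ->; apply/mapP; exists b => //.
  by rewrite mem_enum !inE bS -ax tab.
- apply: contra dw => /eqP <-; apply/mapP; exists a => //.
  by rewrite mem_enum !inE aS Hsym -bx tab.
- by apply: fp => //; rewrite !inE ?ax ?bx.
Qed.
End Tr.

Lemma nl (T : eqType) (x0 : T) q : uniq (x0 :: q) -> next (x0 :: q) (last x0 q) = x0.
Proof. move=> U. have := cycle_next U. rewrite /= rcons_path => /andP [_ /eqP]. done. Qed.

Theorem proposition2 (T : finType) (e : rel T) :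
  halin e -> kd_choosable e 3 1.
Proof.
move=> [t [s [[Htree H4 Hd2] [Us Hs Hpl He]]]] L [HL1 HL2].
move: Htree => [[Hsym Hirr] [Hc HE]].
have deg1 : forall v, 0 < deg t v.
  move=> v.
  have [w wv] : exists w, w \in predC1 v.
    by apply/card_gt0P; rewrite cardC1; lia.
  move: wv; rewrite !inE => wv.
  case/connectP: (Hc v w) => p; case: p => [|u p] /=.
    by move=> _ E; move: wv; rewrite E eqxx.
  by move=> /andP [tvu _] _; apply/card_gt0P; exists u; rewrite inE.
have Hsum : \sum_v deg t v = #|[set p : T * T | t p.1 p.2]|.
  rewrite -sum1_card (eq_bigl (fun p : T * T => true && t p.1 p.2)); last first.
    by move=> p; rewrite inE.
  rewrite -(pair_big_dep xpredT (fun i j => t i j) (fun _ _ => 1)).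
  apply: eq_bigr => i _; rewrite /deg -sum1_card; apply: eq_bigl => j; by rewrite inE.
have Hl : forall v, 3 <= deg t v + 2 * is_leaf t v.
  move=> v; move: (Hd2 v) (deg1 v); rewrite /is_leaf; case: eqP => [->|] //= h1 h2 h3; lia.
have Hs2 : 2 <= size s.
  have h1 : \sum_(v : T) 3 <= \sum_v (deg t v + 2 * is_leaf t v) by apply: leq_sum => v _.
  rewrite big_split /= Hsum HE -big_distrr /= in h1.
  have h2 : \sum_v (is_leaf t v : nat) = size s.
    rewrite -(card_uniqP Us) -sum1_card [RHS]big_mkcond /=.
    apply: eq_bigr => v _; by rewrite Hs; case: is_leaf.
  rewrite h2 sum_nat_const in h1.
move: h1; rewrite (@eq_card _ _ T) // => h1.
  move: H4 h1; set n := #|T| => H4 h1.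
clearbody n; lia.
pose par v := odflt v [pick u | t v u].
have Hpar : forall x, x \in s -> forall y, t x y -> y = par x /\ y \notin s.
  have Hu : forall x, x \in s -> exists p, forall z, t x z = (z == p).
    move=> x xs; have : deg t x == 1 by move: xs; rewrite Hs.
    move/cards1P => [p Hp]; exists p => z.
    have := congr1 (fun A : {set T} => z \in A) Hp.
    by rewrite /= !inE.
  move=> x xs y txy.
  have [p Hp] := Hu x xs.
  have Ey : y = par x.
    rewrite /par; case: pickP => [u tu|/(_ y)]; last by rewrite txy.
    by move: tu txy; rewrite !Hp => /eqP -> /eqP ->.
  split=> //; apply/negP => ys.
  have [p' Hp'] := Hu y ys.
  have Hx' : forall z, t x z -> z = y by move=> z; rewrite Hp => /eqP ->; move: txy; rewrite Hp => /eqP.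
  have tyx : t y x by rewrite Hsym.
  have Hy' : forall z, t y z -> z = x by move=> z; rewrite Hp' => /eqP ->; move: tyx; rewrite Hp' => /eqP.
  have cl : closed t (mem [set x; y]).
    move=> a b tab; rewrite !inE; apply/idP/idP.
    - case/orP=> /eqP E; subst a; first by rewrite (Hx' _ tab) eqxx orbT.
      by rewrite (Hy' _ tab) eqxx.
    - case/orP=> /eqP E; subst b; rewrite Hsym in tab; first by rewrite (Hx' _ tab) eqxx orbT.
      by rewrite (Hy' _ tab) eqxx.
  have : #|[set: T]| <= #|[set x; y]|.
    apply: subset_leq_card; apply/subsetP => w _.
    by have := closed_connect cl (Hc x w); rewrite !inE eqxx => <-.
  rewrite cardsT cards2; lia.
have [f [fL fp]] := @color_forest T t Hsym Hirr Hc L HL1 HE [set v | v \notin s].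
case Es : s => [|x0 q]; first by rewrite Es in Hs2.
have lq : last x0 q \in q by case: q Es Hs2 => [|y q'] /=; [move=> -> | move=> _ _; exact: mem_last].
have Us2 : uniq (x0 :: q) by rewrite -Es.
have Us' := Us2; rewrite /= in Us'; case/andP: Us' => x0q Uq.
have ex0 : e x0 (last x0 q).
  rewrite He Es; apply/orP; right.
  by rewrite mem_head inE lq orbT (nl Us2) eqxx !orbT.
have HI := HL2 _ _ ex0.
have [d dL dw] : exists2 d, d \in L x0 &
    d \notin f (par x0) :: [seq c <- undup (L x0) | c \in L (last x0 q)].
  apply: choose_col => /=; apply: leq_ltn_trans (HL1 x0); by rewrite ltnS.
have dp : d != f (par x0) by move: dw; rewrite inE negb_or => /andP [].
have dl : d \notin L (last x0 q).
  apply: contra dw => dl; by rewrite inE mem_filter dl mem_undup dL orbT.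
have [g [gx0 gq gp]] := @pathcol T L HL1 (fun y => f (par y)) q x0 d Uq x0q.
have Hg : forall v, v \in s -> (g v \in L v) && (g v != f (par v)).
  move=> v; rewrite Es inE => /orP [/eqP ->|]; last exact: gq.
  by rewrite gx0 dL dp.
have Hcyc : cycle (fun a b => (if a \in s then g a else f a) != (if b \in s then g b else f b)) s.
  rewrite {3}Es /= rcons_path; apply/andP; split.
    rewrite (@eq_in_path _ (mem s) _ (fun a b => g a != g b)) //.
      by move=> a b /= -> ->.
    apply/allP => z; rewrite Es; done.
  rewrite Es mem_head inE lq orbT gx0.
  apply: contra dl => /eqP <-.
  by case/andP: (gq _ lq).
exists (fun v => if v \in s then g v else f v); split.
  move=> v; case: ifP => vs; first by case/andP: (Hg v vs).
  by apply: fL; rewrite inE vs.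
move=> x y; rewrite /= He => /orP [txy | /and3P [xs ys /orP [/eqP nx | /eqP ny]]].
- case: (boolP (x \in s)) => xs.
    have [E ps] := Hpar x xs y txy; rewrite (negbTE ps) E.
    by case/andP: (Hg x xs).
  case: (boolP (y \in s)) => ys.
    rewrite Hsym in txy; have [-> ps] := Hpar y ys x txy.
    rewrite eq_sym.
    by case/andP: (Hg y ys).
  by apply: fp => //; rewrite inE.
- by rewrite -nx; exact: (next_cycle Hcyc xs).
- by rewrite -ny eq_sym; exact: (next_cycle Hcyc ys).
Qed.
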